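(* Let $\Sigma$ be a set of exclusion atoms and $x|y$ an exclusion atom. If $\Sigma\vdash x|y$, then $\Sigma\models x|y$.
   Context: A team $T$ is a finite set of assignments $s:\mathcal{V}\to M$, where $\mathcal{V}$ is a set of variables and $M$ a set of values. Letters $x,y,z,u,v,w,\dots$ denote finite tuples of variables; juxtaposition $xy$ denotes concatenation of tuples, and for $x=\langle x_1,\dots,x_n\rangle$, $s(x)=\langle s(x_1),\dots,s(x_n)\rangle$. An exclusion atom is an expression $x|y$ with $|x|=|y|$ (equal lengths), and $T\models x|y$ iff for all $s_1,s_2\in T$, $s_1(x)\neq s_2(y)$. For a set $\Sigma$ of atoms, $\Sigma\models x|y$ means every team satisfying all atoms of $\Sigma$ satisfies $x|y$. $\Sigma\vdash x|y$ means $x|y$ is derivable from $\Sigma$ using the following rules (schemata over arbitrary tuples of variables, with all atoms well-formed, i.e. both sides of equal length): (E1) $x|x\vdash y|z$; (E2) $x|y\vdash y|x$; (E3) $x|y\vdash xu|yv$; (E4) $xuu|yvv\vdash xu|yv$; (E5) $xyz|uvw\vdash xzy|uwv$ where $|x|=|u|$ and $|y|=|v|$; (E6) $xw|yw\vdash zz|xy$. *)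

(* Defs.v *)
From Stdlib Require Import List.
Import ListNotations.

(* An exclusion atom x|y is a pair of tuples (lists) of variables. *)
Definition atom (V : Type) : Type := (list V * list V)%type.

Definition wf {V : Type} (a : atom V) : Prop := length (fst a) = length (snd a).

Definition app_tuple {V M : Type} (s : V -> M) (x : list V) : list M := map s x.

(* A team is a finite set of assignments, represented by a list. *)
Definition team (V M : Type) : Type := list (V -> M).

Definition sat {V M : Type} (T : team V M) (a : atom V) : Prop :=
  forall s1 s2, In s1 T -> In s2 T -> app_tuple s1 (fst a) <> app_tuple s2 (snd a).

Definition entails {V : Type} (Sigma : atom V -> Prop) (a : atom V) : Prop :=
  forall (M : Type) (T : team V M), (forall b, Sigma b -> sat T b) -> sat T a.

Inductive derivable {V : Type} (Sigma : atom V -> Prop) : atom V -> Prop :=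
| D_hyp : forall a, Sigma a -> wf a -> derivable Sigma a
| E1 : forall x y z,
    derivable Sigma (x, x) -> wf (y, z) -> derivable Sigma (y, z)
| E2 : forall x y,
    derivable Sigma (x, y) -> wf (x, y) -> derivable Sigma (y, x)
| E3 : forall x y u v,
    derivable Sigma (x, y) -> wf (x, y) -> wf (x ++ u, y ++ v) ->
    derivable Sigma (x ++ u, y ++ v)
| E4 : forall x y u v,
    derivable Sigma (x ++ u ++ u, y ++ v ++ v) -> wf (x ++ u ++ u, y ++ v ++ v) ->
    wf (x ++ u, y ++ v) -> derivable Sigma (x ++ u, y ++ v)
| E5 : forall x y z u v w,
    length x = length u -> length y = length v ->
    derivable Sigma (x ++ y ++ z, u ++ v ++ w) -> wf (x ++ y ++ z, u ++ v ++ w) ->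
    wf (x ++ z ++ y, u ++ w ++ v) -> derivable Sigma (x ++ z ++ y, u ++ w ++ v)
| E6 : forall x y z w,
    derivable Sigma (x ++ w, y ++ w) -> wf (x ++ w, y ++ w) ->
    wf (z ++ z, x ++ y) -> derivable Sigma (z ++ z, x ++ y).

(* Main.v *)
Require Import Defs.
From Stdlib Require Import List Lia.
Lemma split_eq {A : Type} (a b c d : list A) :
  length a = length c -> a ++ b = c ++ d -> a = c /\ b = d.
Proof.
  revert c; induction a as [|h a IH]; intros [|h' c] Hl He; simpl in *; try lia.
  - auto.
  - inversion He; subst. destruct (IH c ltac:(lia) H1). subst; auto.
Qed.
Lemma sound (V : Type) (Sigma : atom V -> Prop) (a : atom V) :
  derivable Sigma a -> entails Sigma a.
Proof.
  induction 1; unfold entails, sat, wf, app_tuple in *; simpl in *;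
    intros M T HT s1 s2 I1 I2 Heq; repeat rewrite map_app in Heq;
    try rewrite !length_app in H0; try rewrite !length_app in H1;
    try rewrite !length_app in H2; try rewrite !length_app in H3.
  - exact (HT a H s1 s2 I1 I2 Heq).
  - exact (IHderivable M T HT s1 s1 I1 I1 eq_refl).
  - exact (IHderivable M T HT s2 s1 I2 I1 (eq_sym Heq)).
  - Time assert (LL : length (map s1 x) = length (map s2 y)) by (rewrite !length_map; lia).
    Time destruct (split_eq _ _ _ _ LL Heq) as [E _].
    Time apply (IHderivable M T HT s1 s2 I1 I2 E).
  - assert (LL : length (map s1 x) = length (map s2 y)) by (rewrite !length_map; lia).
    destruct (split_eq _ _ _ _ LL Heq) as [E F].
    apply (IHderivable M T HT s1 s2 I1 I2). rewrite !map_app, E, F. reflexivity.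
  - assert (LL : length (map s1 x) = length (map s2 u)) by (rewrite !length_map; lia).
    destruct (split_eq _ _ _ _ LL Heq) as [E F].
    assert (LL2 : length (map s1 z) = length (map s2 w)) by (rewrite !length_map; lia).
    destruct (split_eq _ _ _ _ LL2 F) as [G K].
    apply (IHderivable M T HT s1 s2 I1 I2). rewrite !map_app, E, G, K. reflexivity.
  - assert (LL : length (map s1 z) = length (map s2 x)) by (rewrite !length_map; lia).
    destruct (split_eq _ _ _ _ LL Heq) as [E F].
    apply (IHderivable M T HT s2 s2 I2 I2). rewrite !map_app, <- E, F. reflexivity.
Qed.

Theorem lemma1 (V : Type) (Sigma : atom V -> Prop) (x y : list V) :
  (forall b, Sigma b -> wf b) -> wf (x, y) ->
  derivable Sigma (x, y) -> entails Sigma (x, y).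
Proof.
  intros _ _ H. exact (sound V Sigma _ H).
Qed.
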